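(* For every integer $m\ge 0$ and $n\ge 0$, $$x^n=\sum_{k=0}^{\lfloor n/2\rfloor}(-s)^k\frac{[n]!}{[k]!\,[n-2k]!}\,\frac{[n+m-2k]!}{[n+m-k]!}\,l_{n-2k}(x,m,s,q).$$ Consequently, if $\Lambda_{m,q}$ is the linear functional on polynomials in $x$ determined by $\Lambda_{m,q}\big(l_n(x,m,-q^m,q)\big)=[n=0]$ for all $n\ge0$, then $\Lambda_{m,q}(x^{2n+1})=0$ and $$\Lambda_{m,q}(x^{2n})=q^{mn}\,\frac{[2n]!\,[m]!}{[n]!\,[m+n]!}\quad (n\ge 0).$$
   Context: $q$ is an indeterminate; $[n]=\frac{1-q^n}{1-q}$, $[n]!=[1][2]\cdots[n]$, $[0]!=1$. For an integer $m\ge0$ and indeterminates $x,s$, $$l_n(x,m,s,q)=\sum_{k=0}^{\lfloor n/2\rfloor}s^k q^{\binom k2}\frac{[n]!}{[k]!\,[n-2k]!}\,\frac{[m+n-k-1]!}{[m+n-1]!}\,x^{n-2k}\quad (n\ge1),\qquad l_0(x,m,s,q)=1.$$ $[P]$ is the Iverson bracket. *)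

(* Defs.v *)
From HB Require Import structures.
From mathcomp Require Import all_boot all_order all_algebra.
Set Implicit Arguments. Unset Strict Implicit. Unset Printing Implicit Defensive.
Import Order.TTheory GRing.Theory Num.Theory.
Local Open Scope ring_scope.

Definition qint (F : fieldType) (q : F) (n : nat) : F := \sum_(i < n) q ^+ i.

Definition qfact (F : fieldType) (q : F) (n : nat) : F :=
  \prod_(i < n) qint q i.+1.

Definition lpoly (F : fieldType) (q : F) (m : nat) (s : F) (n : nat) : {poly F} :=
  if n == 0%N then 1 else
  \sum_(k < n./2.+1)
    (s ^+ k * q ^+ 'C(k, 2) * (qfact q n / (qfact q k * qfact q (n - 2 * k)))
       * (qfact q (m + n - k - 1) / qfact q (m + n - 1))) *: 'X^(n - 2 * k).

(* Main.v *)
Require Import Defs.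
From HB Require Import structures.
From mathcomp Require Import all_boot all_order all_algebra.
From mathcomp Require Import ring zify.
Import Order.TTheory GRing.Theory Num.Theory.
Set Implicit Arguments. Unset Strict Implicit. Unset Printing Implicit Defensive.
Local Open Scope ring_scope.

Section Q.
Variables (F : fieldType) (q : F).
Hypothesis hq : forall j : nat, (0 < j)%N -> qint q j != 0.

Lemma qint_add a b : qint q (a + b) = qint q a + q ^+ a * qint q b.
Proof.
rewrite /qint big_split_ord /=; congr (_ + _).
rewrite mulr_sumr; apply: eq_bigr => i _; by rewrite exprD.
Qed.

Lemma qint1 : qint q 1 = 1.
Proof. by rewrite /qint big_ord1 expr0. Qed.

Lemma qfact0 : qfact q 0 = 1.
Proof. by rewrite /qfact big_ord0. Qed.

Lemma qfactS n : qfact q n.+1 = qfact q n * qint q n.+1.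
Proof. by rewrite /qfact big_ord_recr. Qed.

Lemma qfact_neq0 n : qfact q n != 0.
Proof.
elim: n => [|n IH]; first by rewrite qfact0 oner_neq0.
by rewrite qfactS mulf_neq0 // hq.
Qed.

Definition ww r j : F := (-1) ^+ j * q ^+ 'C(j, 2) / (qfact q j * qfact q (r - j)).
Definition ee i N j : F := qfact q (N - j) / qfact q (N - j - i).

Lemma ee_step i N j : (0 < i)%N -> (j + i < N)%N ->
  ee i N j - q ^+ i * ee i N j.+1 = qint q i * ee i.-1 N.-1 j.
Proof.
move=> hi hN.
set a := (N - j - i).-1.
have e1 : (N - j = (a + i).+1)%N by rewrite /a; lia.
have e2 : (N - j - i = a.+1)%N by rewrite /a; lia.
have e3 : (N - j.+1 = a + i)%N by rewrite /a; lia.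
have e4 : (N - j.+1 - i = a)%N by rewrite /a; lia.
have e5 : (N.-1 - j = a + i)%N by rewrite /a; lia.
have e6 : (N.-1 - j - i.-1 = a.+1)%N by rewrite /a; lia.
rewrite /ee e2 e4 e6 e1 e3 e5 !qfactS.
have h1 : qint q (a + i).+1 = qint q i + q ^+ i * qint q a.+1.
  by rewrite -addSn addnC qint_add.
rewrite h1.
have n1 := qfact_neq0 a. have n2 := qfact_neq0 (a + i).
have n3 : qint q a.+1 != 0 by apply: hq.
field; by rewrite n1 n3.
Qed.

Lemma qint_neq0 n : (0 < n)%N -> qint q n != 0.
Proof. exact: hq. Qed.

Lemma ww_pascal r j : (j <= r.+1)%N ->
  qint q r.+1 * ww r.+1 j =
  (if (j <= r)%N then ww r j else 0) - (if (0 < j)%N then q ^+ r * ww r j.-1 else 0).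
Proof.
move=> hj.
have nz := qfact_neq0.
case: j hj => [|j] hj.
  rewrite /ww /= !subn0 qfactS qfact0 !expr0 !mul1r subr0.
  have := nz r; have : qint q r.+1 != 0 by apply: hq.
  move=> h1 h2. field; by rewrite h1 h2.
case: (ltngtP j r) => hjr; last first.
- subst j. rewrite /= sub0r /ww subnn qfact0 qfactS.
  rewrite exprS binS bin1 exprD subnn qfact0.
  have := nz r; have : qint q r.+1 != 0 by apply: hq.
  move=> h1 h2. field; by rewrite h1 h2.
- lia.
- rewrite /=.
  set c := (r - j.+1)%N.
  have er : r = (j + c).+1 by rewrite /c; lia.
  rewrite er /ww.
  have -> : ((j + c).+2 - j.+1 = c.+1)%N by lia.
  have -> : ((j + c).+1 - j.+1 = c)%N by lia.
  have -> : ((j + c).+1 - j = c.+1)%N by lia.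
  rewrite !qfactS binS exprS exprD.
  have h3 : qint q (j + c).+2 = qint q c.+1 + q ^+ c.+1 * qint q j.+1.
    by rewrite -qint_add; congr qint; lia.
  rewrite h3.
  have n1 := nz j; have n2 := nz c.
  have n3 : qint q j.+1 != 0 by apply: hq.
  have n4 : qint q c.+1 != 0 by apply: hq.
  rewrite bin1 !exprS. rewrite (exprD q j c).
  field; by rewrite n1 n2 n3 n4.
Qed.

Definition SS r N := \sum_(j < r.+1) ww r j * ee r.-1 N j.

Lemma SS_step r N : (0 < r)%N -> (2 * r < N)%N ->
  qint q r.+1 * SS r.+1 N = qint q r * SS r N.-1.
Proof.
move=> hr hN.
rewrite /SS mulr_sumr.
transitivity (\sum_(j < r.+2) (((if (j <= r)%N then ww r j else 0) -
   (if (0 < j)%N then q ^+ r * ww r j.-1 else 0)) * ee r N j)).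
  apply: eq_bigr => j _; rewrite mulrA ww_pascal //; by move: (ltn_ord j).
under eq_bigr => j _ do rewrite mulrBl.
rewrite sumrB big_ord_recr /= ltnn /= (mul0r (ee r N r.+1)) addr0 [X in _ - X]big_ord_recl /=.
rewrite (mul0r (ee r N 0)) add0r.
rewrite mulr_sumr -sumrB; apply: eq_bigr => j _.
rewrite /= -ltnS (ltn_ord j) /bump /= add1n /= add0n.
have h := @ee_step r N j hr.
rewrite [RHS]mulrCA -h; last by have := ltn_ord j; lia.
ring.
Qed.

Lemma SS0 r N : (0 < r)%N -> (2 * r <= N.+1)%N -> SS r N = 0.
Proof.
elim: r N => [|r IH] N; first by [].
move=> _ hN.
case: r IH hN => [|r] IH hN.
  rewrite /SS big_ord_recr big_ord1 /= /ww /ee !subn0 subnn qfact0 qfactS qfact0 qint1.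
  rewrite !divff ?qfact_neq0 //=.
  have -> : 'C(0, 2) = 0%N by []. have -> : 'C(1, 2) = 0%N by []. by field; apply: oner_neq0.
have hN' : (2 * r.+1 < N)%N by lia.
have h := @SS_step r.+1 N isT hN'.
have nz : qint q r.+2 != 0 by apply: hq.
rewrite IH // in h; last by lia.
by move: h; rewrite mulr0 => /eqP; rewrite mulf_eq0 (negbTE nz) /= => /eqP.
Qed.
End Q.

Lemma tri (V : zmodType) (G : nat -> nat -> V) (B : nat) :
  \sum_(j < B) \sum_(k < (B - j)%N) G j k = \sum_(r < B) \sum_(j < r.+1) G j (r - j)%N.
Proof.
elim: B => [|B IH]; first by rewrite !big_ord0.
rewrite big_ord_recr [RHS]big_ord_recr /= -IH subSnn big_ord1.
rewrite [in RHS]big_ord_recr /= subnn.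
have -> : \sum_(j < B) \sum_(k < (B.+1 - j)%N) G j k =
          \sum_(j < B) (\sum_(k < (B - j)%N) G j k + G j (B - j)%N).
  apply: eq_bigr => j _; rewrite subSn; last exact: ltnW (ltn_ord j).
  by rewrite big_ord_recr.
rewrite big_split /=.
by rewrite !addrA.
Qed.

Lemma sgn_sub (R : pzRingType) j r : (j <= r)%N ->
  (-1) ^+ (r - j) = (-1) ^+ r * (-1) ^+ j :> R.
Proof.
move=> h. rewrite -{2}(subnK h) exprD -mulrA -expr2 -exprM mulnC exprM sqrrN expr1n.
by rewrite expr1n mulr1.
Qed.

Section P.
Variables (F : fieldType) (q : F).
Hypothesis hq : forall j : nat, (0 < j)%N -> qint q j != 0.
Variables (m : nat) (s : F).

Local Notation qf := (qfact q).

Definition cc n j : F := s ^+ j * q ^+ 'C(j, 2) * (qf n / (qf j * qf (n - 2 * j)))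
       * (qf (m + n - j - 1) / qf (m + n - 1)).
Definition dd n k : F := (- s) ^+ k * (qf n / (qf k * qf (n - 2 * k)))
                 * (qf (n + m - 2 * k) / qf (n + m - k)).

Lemma nzf n : qf n != 0. Proof. exact: qfact_neq0. Qed.

Lemma cc_n0 n : cc n 0 = 1.
Proof.
rewrite /cc !expr0 muln0 !subn0 qfact0 !mul1r divff ?nzf // divff ?nzf //.
by rewrite mulr1.
Qed.

Lemma dd_n0 n : dd n 0 = 1.
Proof.
rewrite /dd !expr0 muln0 !subn0 qfact0 !mul1r divff ?nzf // divff ?nzf //.
by rewrite mulr1.
Qed.

Lemma lpolyE N : lpoly q m s N = \sum_(k < N./2.+1) cc N k *: 'X^(N - 2 * k).
Proof.
case: N => [|N]; last by [].
rewrite /lpoly /= big_ord1 muln0 subn0 expr0.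
have := cc_n0 0; rewrite /cc => ->. by rewrite scale1r.
Qed.

Lemma coef_term n r j : (0 < r)%N -> (2 * r <= n)%N -> (j <= r)%N ->
  cc n j * dd (n - 2 * j) (r - j) =
  (s ^+ r * qf n * qf (m + n - 2 * r) / (qf (n - 2 * r) * qf (m + n - 1))) *
  ((-1) ^+ r * (ww q r j * ee q r.-1 (m + n - 1) j)).
Proof.
move=> hr hn hj.
rewrite /cc /dd /ww /ee.
have -> : (n - 2 * j - 2 * (r - j) = n - 2 * r)%N by lia.
have -> : (n - 2 * j + m - 2 * (r - j) = m + n - 2 * r)%N by lia.
have -> : (n - 2 * j + m - (r - j) = m + n - 1 - j - r.-1)%N by lia.
have -> : (m + n - j - 1 = m + n - 1 - j)%N by lia.
rewrite (exprNn s) (@sgn_sub F j r hj).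
rewrite [s ^+ r](_ : _ = s ^+ (r - j) * s ^+ j); last by rewrite -exprD subnK.
have := nzf n; have := nzf j; have := nzf (n - 2 * j); have := nzf (m + n - 1);
have := nzf (r - j); have := nzf (n - 2 * r); have := nzf (m + n - 1 - j - r.-1).
move=> h1 h2 h3 h4 h5 h6 h7.
field.
by rewrite ?h1 ?h2 ?h3 ?h4 ?h5 ?h6 ?h7.
Qed.

Lemma coef0 n r : (0 < r)%N -> (2 * r <= n)%N ->
  \sum_(j < r.+1) cc n j * dd (n - 2 * j) (r - j) = 0.
Proof.
move=> hr hn.
rewrite (eq_bigr (fun j : 'I_r.+1 =>
  (s ^+ r * qf n * qf (m + n - 2 * r) / (qf (n - 2 * r) * qf (m + n - 1))) *
  ((-1) ^+ r * (ww q r j * ee q r.-1 (m + n - 1) j)))); last first.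
  by move=> j _; apply: coef_term => //; move: (ltn_ord j).
rewrite -mulr_sumr -mulr_sumr.
have h2 : (2 * r <= (m + n - 1).+1)%N by lia.
by have := SS0 hq hr h2; rewrite /SS => ->; rewrite !mulr0.
Qed.

Definition RR n := \sum_(k < n./2.+1) dd n k *: lpoly q m s (n - 2 * k).

Lemma key n : \sum_(j < n./2.+1) cc n j *: RR (n - 2 * j) = lpoly q m s n.
Proof.
set A := n./2.
have hA : (A = n %/ 2)%N by rewrite divn2.
clearbody A.
transitivity (\sum_(j < A.+1) \sum_(k < (A.+1 - j)%N)
   ((cc n j * dd (n - 2 * j) k) *: lpoly q m s (n - 2 * j - 2 * k))).
  apply: eq_bigr => j _. rewrite /RR scaler_sumr.
  have -> : ((n - 2 * j)./2.+1 = A.+1 - j)%N.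
    by have := ltn_ord j; rewrite -?divn2; lia.
  by apply: eq_bigr => k _; rewrite scalerA.
rewrite (tri (fun j k => (cc n j * dd (n - 2 * j) k) *: lpoly q m s (n - 2 * j - 2 * k))).
transitivity (\sum_(r < A.+1)
   (\sum_(j < r.+1) cc n j * dd (n - 2 * j) (r - j)) *: lpoly q m s (n - 2 * r)).
  apply: eq_bigr => r _; rewrite scaler_suml; apply: eq_bigr => j _.
  have -> : (n - 2 * j - 2 * (r - j) = n - 2 * r)%N.
    by have := ltn_ord j; have := ltn_ord r; rewrite -?divn2; lia.
  by [].
rewrite big_ord_recl big_ord1 /= cc_n0 dd_n0 mulr1 scale1r muln0 subn0.
rewrite big1 ?addr0 // => i _.
rewrite coef0 ?scale0r //.
by rewrite /bump /= add1n; have := ltn_ord i; lia.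
Qed.

Lemma mainX n : 'X^n = RR n.
Proof.
elim/ltn_ind: n => n IH.
have K := key n. rewrite lpolyE in K.
rewrite big_ord_recl [in RHS]big_ord_recl cc_n0 !scale1r muln0 !subn0 in K.
have E : \sum_(i < n./2) cc n (lift ord0 i) *: RR (n - 2 * lift ord0 i) =
         \sum_(i < n./2) cc n (lift ord0 i) *: 'X^(n - 2 * lift ord0 i).
  apply: eq_bigr => i _; rewrite -IH //.
  rewrite lift0; have hi : (i < n %/ 2)%N by rewrite divn2. lia.
rewrite E in K.
by move/addIr: K.
Qed.
End P.

Theorem mainTheorem9 (F : fieldType) (q : F)
  (hq : forall j : nat, (0 < j)%N -> qint q j != 0) (m : nat) :
  (forall (s : F) (n : nat),
     'X^n = \sum_(k < n./2.+1)
              ((- s) ^+ k * (qfact q n / (qfact q k * qfact q (n - 2 * k)))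
                 * (qfact q (n + m - 2 * k) / qfact q (n + m - k)))
                *: lpoly q m s (n - 2 * k))
  /\
  (forall Lam : {poly F} -> F,
     (forall (a : F) (p r : {poly F}), Lam (a *: p + r) = a * Lam p + Lam r) ->
     (forall n : nat, Lam (lpoly q m (- q ^+ m) n) = (n == 0%N)%:R) ->
     forall n : nat,
       Lam 'X^((2 * n).+1) = 0 /\
       Lam 'X^(2 * n) = q ^+ (m * n) * (qfact q (2 * n) * qfact q m)
                          / (qfact q n * qfact q (m + n))).
Proof.
split.
  by move=> s n; exact: (mainX hq m s n).
move=> Lam hlin hL n.
have L0 : Lam 0 = 0.
  have h := hlin 1 0 0; rewrite scaler0 addr0 mul1r in h.
  by move: h; rewrite -{1}(addr0 (Lam 0)) => /addrI ->.
have LD : forall p r, Lam (p + r) = Lam p + Lam r.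
  by move=> p r; rewrite -(scale1r p) hlin mul1r scale1r.
have LZ : forall a p, Lam (a *: p) = a * Lam p.
  by move=> a p; rewrite -(addr0 (a *: p)) hlin L0 addr0.
have LX : forall k, Lam 'X^k = \sum_(j < k./2.+1) dd q m (- q ^+ m) k j * (k - 2 * j == 0)%N%:R.
  move=> k; rewrite (mainX hq m (- q ^+ m) k) /RR (big_morph Lam LD L0).
  by apply: eq_bigr => j _; rewrite LZ hL.
split.
  rewrite LX big1 // => j _.
  have hj : (j < ((2 * n).+1) %/ 2 + 1)%N by rewrite divn2 addn1.
  have -> : ((2 * n).+1 - 2 * j == 0)%N = false by case: eqP => //; lia.
  by rewrite mulr0.
rewrite LX (_ : (2 * n)./2 = n); last by rewrite -divn2; lia.
rewrite big_ord_recr /= big1 ?add0r; last first.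
  move=> j _.
  have hj := ltn_ord j.
  have -> : (2 * n - 2 * j == 0)%N = false by case: eqP => //; lia.
  by rewrite mulr0.
rewrite subnn eqxx mulr1 /dd opprK subnn qfact0 -exprM mulnC.
have -> : (2 * n + m - 2 * n = m)%N by lia.
have -> : (2 * n + m - n = m + n)%N by lia.
have := qfact_neq0 hq n; have := qfact_neq0 hq (m + n); have := qfact_neq0 hq m.
move=> h1 h2 h3.
field. by rewrite h2 h3.
Qed.
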